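(* Let $q$ be a prime power, let $\lambda \in \mathbb{F}_{q^n}\setminus\mathbb{F}_q$, $t = [\mathbb{F}_q(\lambda):\mathbb{F}_q]$, let $\overline{S}$ be an $\mathbb{F}_{q^t}$-subspace of $\mathbb{F}_{q^n}$ of $\mathbb{F}_{q^t}$-dimension $l>0$, $b \in \mathbb{F}_{q^n}^*$ with $\mathbb{F}_{q^t}\cap b\overline{S}=\{0\}$, $0<m<t$, $k = tl+m$ with $t+1 \le k \le n$, and $S = \overline{S} \oplus b\langle 1, \lambda, \ldots, \lambda^{m-1}\rangle_{\mathbb{F}_q}$, with $Y=\langle S\rangle_{\mathbb{F}_{q^t}} = \mathbb{F}_{q^n}$ and $2m > t$. Suppose $\mathcal{C}=\mathrm{Orb}(S)$ is an $r$-FWS code with $r = 2m+t(l-1)$. Then \[ \omega_{2i}(\mathcal{C}) = \begin{cases} (q + 1)q^{2i-1}, & \text{if } i \in \{1, \ldots, t - m - 1\}, \\ \frac{q^n - q^{2(t-m)-1}}{q - 1}, & \text{if } i = t - m. \end{cases} \]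
   Context: $\mathrm{Orb}(S)=\{\alpha S:\alpha\in\mathbb{F}_{q^n}^*\}$; $d(U,V)=2k-2\dim_{\mathbb{F}_q}(U\cap V)$; the weight distribution is $\omega_{2i}(\mathcal{C})=|\{\alpha S: \alpha\in\mathbb{F}_{q^n}^*, d(S,\alpha S)=2i\}|$ for $i=1,\dots,k$. $\mathcal{C}$ is an $r$-FWS code if $\omega_{2i}=0$ for $i=k-r+1,\ldots,k$ and $\omega_{2i}\neq 0$ for all $i=1,\ldots,k-r$. $\langle S\rangle_{\mathbb{F}_{q^t}}$ denotes the $\mathbb{F}_{q^t}$-span of $S$. *)

(* Defs.v *)
From HB Require Import structures.
From mathcomp Require Import all_boot all_order all_algebra all_field.
Set Implicit Arguments. Unset Strict Implicit. Unset Printing Implicit Defensive.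
Import GRing.Theory.
Local Open Scope ring_scope.

Section Orbit.
Variables (F : finFieldType) (L : fieldExtType F).

Definition mulsp (a : L) (S : {vspace L}) : {vspace L} := (<[a]> * S)%VS.

(* subspace distance d(U,V) = 2 dim U - 2 dim(U cap V)  (for dim U = dim V = k) *)
Definition sdist (U V : {vspace L}) : nat := (2 * \dim U - 2 * \dim (U :&: V))%N.

(* omega_{2i}(Orb S) = #{ alpha S : alpha in L^*, d(S, alpha S) = 2 i } *)
Definition orb_weight (S : {vspace L}) (i : nat) : nat :=
  size (undup (map (fun a : L => mulsp a S)
    [seq a <- enum (finvect_type L) |
       (a != 0) && (sdist S (mulsp a S) == 2 * i)%N])).

Definition FWS (S : {vspace L}) (r : nat) : Prop :=
  (forall i, (\dim S - r < i <= \dim S)%N -> orb_weight S i = 0%N) /\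
  (forall i, (1 <= i <= \dim S - r)%N -> orb_weight S i <> 0%N).

End Orbit.

(* Main.v *)
Require Import Defs.
From HB Require Import structures.
From mathcomp Require Import all_boot all_order all_algebra all_field.
From mathcomp Require Import zify ring.
Set Implicit Arguments. Unset Strict Implicit. Unset Printing Implicit Defensive.
Import GRing.Theory.
Local Open Scope ring_scope.
Section Poly.
Variables (F : finFieldType) (L : fieldExtType F) (lam : L).

Definition ev (p : {poly F}) : L := (map_poly (in_alg L) p).[lam].
Definition P (s : nat) : {vspace L} := span [seq lam ^+ j | j <- iota 0 s].
Local Notation t := (\dim <<1%VS; lam>>%VS).

Lemma evM p q : ev (p * q) = ev p * ev q.
Proof. by rewrite /ev rmorphM hornerM. Qed.
Lemma evD p q : ev (p + q) = ev p + ev q.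
Proof. by rewrite /ev rmorphD hornerD. Qed.
Lemma evB p q : ev (p - q) = ev p - ev q.
Proof. by rewrite /ev rmorphB hornerD hornerN. Qed.
Lemma evC c : ev c%:P = c%:A.
Proof. by rewrite /ev map_polyC hornerC. Qed.
Lemma evXn s : ev 'X^s = lam ^+ s.
Proof. by rewrite /ev map_polyXn hornerXn. Qed.
Lemma ev0 : ev 0 = 0.
Proof. by rewrite /ev rmorph0 horner0. Qed.
Lemma evZ c p : ev (c *: p) = c *: ev p.
Proof. by rewrite -mul_polyC evM evC mulr_algl. Qed.

Lemma adj_t : adjoin_degree (asval (1%AS : {subfield L})) lam = t.
Proof. by rewrite adjoin_degreeE dimv1 divn1. Qed.

Lemma ev_eq0 (p : {poly F}) : (size p <= t)%N -> ev p = 0 -> p = 0.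
Proof.
move=> sp e0; apply/eqP; rewrite -(map_poly_eq0 (in_alg L)).
rewrite -(root_small_adjoin_poly (K := 1%AS) (x := lam)).
- by apply/rootP.
- exact: alg_polyOver.
by rewrite size_map_poly adj_t.
Qed.

Lemma P_S s : P s.+1 = (P s + <[lam ^+ s]>)%VS.
Proof. by rewrite /P -addn1 iotaD map_cat span_cat /= span_cons span_nil addv0. Qed.

Lemma P0 : P 0 = 0%VS.
Proof. by rewrite /P /= span_nil. Qed.

Lemma memP s x : reflect (exists p : {poly F}, (size p <= s)%N /\ x = ev p) (x \in P s).
Proof.
elim: s x => [|s IH] x.
  rewrite P0 memv0; apply: (iffP eqP) => [->|[p [sp ->]]].
    by exists 0; rewrite size_poly0 ev0.
  by move: sp; rewrite leqn0 size_poly_eq0 => /eqP ->; rewrite ev0.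
rewrite P_S; apply: (iffP memv_addP) => [[u Pu [v /vlineP [k ->] ->]]|[p [sp ->]]].
  have [p [sp ->]] := IH u Pu.
  exists (p + k *: 'X^s); split; last by rewrite evD evZ evXn.
  rewrite (leq_trans (size_polyD _ _)) // geq_max (leq_trans sp) //.
  by rewrite (leq_trans (size_scale_leq _ _)) // size_polyXn.
pose p0 := p - p`_s *: 'X^s.
have sp0 : (size p0 <= s)%N.
  apply/leq_sizeP => j lej; rewrite /p0 coefB coefZ coefXn.
  case: (ltngtP s j) lej => // [ltsj|->] _; last by rewrite mulr1 subrr.
  by rewrite mulr0 subr0 nth_default // (leq_trans sp).
exists (ev p0); first by apply/IH; exists p0.
exists (p`_s *: lam ^+ s); first by apply/vlineP; exists p`_s.
by rewrite /p0 evB evZ evXn subrK.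
Qed.

Lemma ev_P (p : {poly F}) s : (size p <= s)%N -> ev p \in P s.
Proof. by move=> sp; apply/memP; exists p. Qed.


Lemma size_sub_le (p q : {poly F}) n : (size p <= n)%N -> (size q <= n)%N -> (size (p - q)%R <= n)%N.
Proof. by move=> sp sq; rewrite (leq_trans (size_polyD _ _)) // geq_max size_polyN sp sq. Qed.

Lemma ev_inj (p q : {poly F}) : (size p <= t)%N -> (size q <= t)%N -> ev p = ev q -> p = q.
Proof.
move=> sp sq e; apply/eqP; rewrite -subr_eq0; apply/eqP/ev_eq0; last by rewrite evB e subrr.
exact: size_sub_le.
Qed.

Lemma lamXn_neq0 s : (s < t)%N -> lam ^+ s != 0.
Proof.
move=> lst; apply/eqP => e; have := @ev_eq0 'X^s; rewrite size_polyXn evXn => /(_ lst e) /eqP.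
by rewrite -size_poly_eq0 size_polyXn.
Qed.

Lemma dimP s : (s <= t)%N -> \dim (P s) = s.
Proof.
elim: s => [|s IH] lest; first by rewrite P0 dimv0.
have := dimv_sum_cap (P s) <[lam ^+ s]>; rewrite -P_S IH ?(ltnW lest) //.
have -> : (P s :&: <[lam ^+ s]> = 0)%VS.
  apply/eqP; rewrite -subv0; apply/subvP => x /memv_capP [/memP [p [sp ->]] /vlineP [k ek]].
  move: ek; rewrite -evXn -evZ => ek.
  have ep : p = k *: 'X^s.
    apply: ev_inj ek; first exact: (leq_trans sp (ltnW lest)).
    by rewrite (leq_trans (size_scale_leq _ _)) // size_polyXn.
  have : k = 0.
    apply/eqP; apply: contraLR sp => kn0; rewrite -ltnNge ep size_scale ?size_polyXn //.
  by move=> k0; rewrite ep k0 scale0r ev0 memv0.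
by rewrite dimv0 addn0 dim_vline lamXn_neq0 // addn1.
Qed.

Lemma P_le s s' : (s <= s')%N -> (P s <= P s')%VS.
Proof.
move=> le; apply/subvP => x /memP [p [sp ->]]; apply/memP; exists p; split => //.
exact: leq_trans le.
Qed.

Lemma P_Fqt s : (P s <= <<1%VS; lam>>)%VS.
Proof.
apply/span_subvP => x /mapP [j _ ->]; apply: rpredX; exact: memv_adjoin.
Qed.


Local Notation Fqt := (<<1%VS; lam>>%VS).

Lemma memaV (a x : L) (V : {vspace L}) :
  reflect (exists2 u, u \in V & x = u * a) (x \in (<[a]> * V)%VS).
Proof. by rewrite prodvC; apply: memv_cosetP. Qed.

Lemma dim_aV (a : L) (V : {vspace L}) : a != 0 -> \dim (<[a]> * V)%VS = \dim V.
Proof. by move=> a0; rewrite prodvC dim_cosetv. Qed.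

Lemma t_gt0 : (0 < t)%N.
Proof. exact: (adim_gt0 (<<1%VS; lam>>)%AS). Qed.

Lemma aV_Fqt (a : L) (V : {vspace L}) : a \in Fqt -> (V <= Fqt)%VS -> (<[a]> * V <= Fqt)%VS.
Proof.
move=> aF VF; apply/subvP => x /memaV [u uV ->].
by apply: (memvM (A := (<<1%VS; lam>>)%AS)) => //; apply: (subvP VF).
Qed.

Definition D (a : L) s := \dim (P s :&: <[a]> * P s)%VS.

Lemma D0 a : D a 0 = 0%N.
Proof. by rewrite /D P0 cap0v dimv0. Qed.

Lemma D_ge a s : a \in Fqt -> a != 0 -> (s <= t)%N -> (s + s <= D a s + t)%N.
Proof.
move=> aF a0 st; have := dimv_sum_cap (P s) (<[a]> * P s); rewrite dim_aV // dimP //.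
move=> <-; rewrite addnC leq_add2l; apply: dimvS.
by rewrite subv_add P_Fqt aV_Fqt ?P_Fqt.
Qed.

Definition Qd a e := (0 < D a e.+1)%N || (t <= e)%N.
Lemma Qd_ex a : exists e, Qd a e.
Proof. by exists t; rewrite /Qd leqnn orbT. Qed.
Definition d a := ex_minn (Qd_ex a).

Lemma Qd_half a : a \in Fqt -> a != 0 -> Qd a t./2.
Proof.
move=> aF a0; apply/orP; left.
have h := D_ge (s := t./2.+1) aF a0.
have st : (t./2.+1 <= t)%N.
  by move: (odd_double_half t) t_gt0; rewrite -addnn; case: (odd t) => /=; lia.
have := h st; move: (odd_double_half t); rewrite -addnn; case: (odd t) => /=; lia.
Qed.

Lemma d_half a : a \in Fqt -> a != 0 -> (d a <= t./2)%N.
Proof. by move=> aF a0; rewrite /d; case: ex_minnP => m _ /(_ _ (Qd_half aF a0)). Qed.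

Lemma d_lt_t a : a \in Fqt -> a != 0 -> (d a < t)%N.
Proof.
move=> aF a0; apply: (leq_ltn_trans (d_half aF a0)).
by move: (odd_double_half t) t_gt0; rewrite -addnn; case: (odd t) => /=; lia.
Qed.

Lemma D_d a : a \in Fqt -> a != 0 -> (0 < D a (d a).+1)%N.
Proof.
move=> aF a0; have lt := d_lt_t aF a0; move: lt; rewrite /d; case: ex_minnP => m.
by rewrite /Qd => /orP [//|] /leq_ltn_trans H _ /H; rewrite ltnn.
Qed.

Lemma D_small a s : a \in Fqt -> a != 0 -> (s <= d a)%N -> D a s = 0%N.
Proof.
move=> aF a0; case: s => [|e] le; first exact: D0.
have lt : (e < d a)%N by [].
move: lt; rewrite /d; case: ex_minnP => m _ min lt.
apply/eqP; rewrite -leqn0 leqNgt; apply/negP => H.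
by have := min e; rewrite /Qd H => /(_ isT); rewrite leqNgt lt.
Qed.


Section Key.
Variables (a : L).
Hypotheses (aF : a \in Fqt) (a0 : a != 0).
Local Notation dd := (d a).

Lemma ev_neq0 (p : {poly F}) : (size p <= t)%N -> p != 0 -> ev p != 0.
Proof. by move=> sp; apply: contra => /eqP /(ev_eq0 sp) ->. Qed.

Lemma cap_d0 x u : x \in P dd -> u \in P dd -> x = u * a -> x = 0.
Proof.
move=> xP uP e; have := D_small aF a0 (leqnn dd); rewrite /D => /eqP.
rewrite dimv_eq0 => /eqP cap0; apply/eqP; rewrite -memv0 -cap0.
by rewrite memv_cap xP; apply/memaV; exists u.
Qed.

Lemma min_pair : exists A C : {poly F}, [/\ ev A = ev C * a, A != 0, C != 0 &
  maxn (size A) (size C) = dd.+1].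
Proof.
have := D_d aF a0; rewrite /D lt0n dimv_eq0 -vpick0 => x0.
have := memv_pick (P dd.+1 :&: <[a]> * P dd.+1)%VS.
move: x0; set x := vpick _ => x0.
rewrite memv_cap => /andP [/memP [A [sA eA]] /memaV [u /memP [C [sC eC]] exu]].
have eAC : ev A = ev C * a by rewrite -eA -eC.
have A0 : A != 0 by apply: contra x0 => /eqP A0; rewrite eA A0 ev0.
have C0 : C != 0 by apply: contra x0 => /eqP C0; rewrite exu eC C0 ev0 mul0r.
exists A, C; split => //; apply/eqP; rewrite eqn_leq geq_max sA sC /= leqNgt.
apply/negP; rewrite ltnS geq_max => /andP [sA' sC'].
move: x0; rewrite eA (@cap_d0 (ev A) (ev C)) ?eqxx //; exact: ev_P.
Qed.


Section Key2.
Variables (A C : {poly F}).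
Hypotheses (eAC : ev A = ev C * a) (A0 : A != 0) (C0 : C != 0)
  (mAC : maxn (size A) (size C) = dd.+1).

Let sA : (size A <= dd.+1)%N. Proof. by rewrite -mAC leq_maxl. Qed.
Let sC : (size C <= dd.+1)%N. Proof. by rewrite -mAC leq_maxr. Qed.
Let dt : (dd.+1 <= t)%N. Proof. exact: d_lt_t. Qed.

Lemma pair_mult (f g : {poly F}) s : (size f <= s)%N -> (size g <= s)%N -> (s + dd <= t)%N ->
  ev f = ev g * a -> exists2 h, f = h * A & g = h * C.
Proof.
move=> sf sg sdt efg.
have fCgA : f * C = g * A.
  apply: ev_inj.
  - by rewrite (leq_trans (size_polyMleq _ _)) // (leq_trans _ sdt) //; move: sC; lia.
  - by rewrite (leq_trans (size_polyMleq _ _)) // (leq_trans _ sdt) //; move: sA; lia.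
  - by rewrite !evM efg eAC; ring.
set h := g %/ C; set r := g %% C.
have eg : g = h * C + r by rewrite /h /r -divp_eq.
set f' := f - h * A.
have ef' : f' * C = r * A.
  have -> : r = g - h * C by rewrite eg addrC addKr.
  by rewrite /f' mulrBl fCgA mulrBl; congr (_ - _); ring.
have evC0 : ev C != 0 by apply: ev_neq0 => //; exact: leq_trans sC dt.
have evf' : ev f' = ev r * a.
  apply: (mulIf evC0); rewrite -evM ef' evM eAC; ring.
have sr : (size r < size C)%N by rewrite ltn_modp.
have sf' : (size f' <= dd)%N.
  have [r0|rn0] := eqVneq r 0.
    move: ef'; rewrite r0 mul0r => /eqP; rewrite mulf_eq0 (negPf C0) orbF => /eqP ->.
    by rewrite size_poly0.
  have f'0 : f' != 0.
    by apply: contraNneq (mulf_neq0 rn0 A0) => f'0; rewrite -ef' f'0 mul0r.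
  have := congr1 (fun p : {poly F} => size p) ef'; rewrite /= !size_mul //.
  have p1 : (0 < size f')%N by rewrite size_poly_gt0.
  have p2 : (0 < size C)%N by rewrite size_poly_gt0.
  have p3 : (0 < size r)%N by rewrite size_poly_gt0.
  have p4 : (0 < size A)%N by rewrite size_poly_gt0.
  move: sr sA; rewrite -!subn1; set x1 := size f'; set x2 := size C; set x3 := size r; set x4 := size A; lia.
have sr' : (size r <= dd)%N by rewrite -ltnS (leq_trans sr).
have := cap_d0 (ev_P sf') (ev_P sr') evf'.
have ddt : (dd <= t)%N by exact: ltnW.
move=> /(ev_eq0 (leq_trans sf' ddt)) f'0.
have r0 : r = 0.
  apply: (ev_eq0 (leq_trans sr' ddt)); apply/eqP.
  by move: evf'; rewrite f'0 ev0 => /esym/eqP; rewrite mulf_eq0 (negPf a0) orbF.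
exists h; last by rewrite eg r0 addr0.
by apply/eqP; rewrite -subr_eq0 -/f' f'0.
Qed.

Lemma cap_eq s : (dd <= s)%N -> (s + dd <= t)%N ->
  (P s :&: <[a]> * P s)%VS = (<[ev A]> * P (s - dd))%VS.
Proof.
move=> ds sdt; apply/vspaceP => y; apply/idP/idP.
  rewrite memv_cap => /andP [/memP [f [sf ->]] /memaV [u /memP [g [sg ->]] efg]].
  have [h fh gh] := pair_mult sf sg sdt efg.
  apply/memaV; exists (ev h); last by rewrite fh evM mulrC.
  apply: ev_P.
  have [->|h0] := eqVneq h 0; first by rewrite size_poly0.
  move: sf sg; rewrite fh gh !size_mul //.
  have p1 : (0 < size h)%N by rewrite size_poly_gt0.
  have p2 : (0 < size C)%N by rewrite size_poly_gt0.
  have p4 : (0 < size A)%N by rewrite size_poly_gt0.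
  move: mAC; rewrite -!subn1; set x1 := size h; set x2 := size C; set x4 := size A; lia.
move=> /memaV [u /memP [h [sh ->]] ->].
have sh' : (size (h * A)%R <= s)%N.
  by rewrite (leq_trans (size_polyMleq _ _)) //; move: sA; lia.
have sh'' : (size (h * C)%R <= s)%N.
  by rewrite (leq_trans (size_polyMleq _ _)) //; move: sC; lia.
rewrite memv_cap; apply/andP; split; first by rewrite -evM; apply: ev_P.
by apply/memaV; exists (ev (h * C)); [apply: ev_P | rewrite evM eAC mulrA].
Qed.

End Key2.

Lemma D_formula s : (s + dd <= t)%N -> D a s = (s - dd)%N.
Proof.
move=> sdt; have [sd|ds] := leqP s dd.
  by rewrite D_small //; apply/esym/eqP; rewrite subn_eq0.
have [A [C [eAC A0 C0 mAC]]] := min_pair.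
rewrite /D (cap_eq eAC A0 C0 mAC (ltnW ds) sdt) dim_aV ?dimP //.
  by rewrite (leq_trans (leq_subr _ _)) // (leq_trans _ sdt) // leq_addr.
apply: ev_neq0 => //; rewrite (leq_trans _ (d_lt_t aF a0)) //.
by rewrite -mAC leq_maxl.
Qed.

End Key.


Local Notation T := (finvect_type L).
Local Notation q := #|F|.

Lemma cardV (V : {vspace L}) : #|[pred x : T | x \in V]| = (q ^ \dim V)%N.
Proof. by rewrite -(card_vspace (T := T) V); apply: eq_card => x. Qed.

Lemma cardV0 (V : {vspace L}) : #|[pred x : T | (x \in V) && (x != 0)]| = (q ^ \dim V - 1)%N.
Proof.
rewrite -cardV [in RHS](cardD1 0) [0 \in _]inE mem0v /= add1n subSS subn0; apply: eq_card => x.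
by rewrite !inE andbC.
Qed.

Lemma card_sum (U : finType) (Q : pred U) : #|Q| = (\sum_(x : U) (Q x : nat))%N.
Proof. by rewrite -sum1_card big_mkcond /=; apply: eq_bigr => x _; rewrite unfold_in; case: (Q x). Qed.

Definition toL (x : T) : L := x.
Definition Fq0 := [pred a : T | (toL a \in Fqt) && (toL a != 0)].
Definition Qc s (a x : T) := [&& toL x \in P s, toL x \in (<[toL a]> * P s)%VS & toL x != 0].

Lemma memaV' (a x : L) V : a != 0 -> (x \in (<[a]> * V)%VS) = (x / a \in V).
Proof.
move=> a0; apply/memaV/idP => [[u uV ->]|xa]; first by rewrite mulfK.
by exists (x / a); rewrite ?divfK.
Qed.

Lemma divx_inj (x : L) : x != 0 -> injective (fun a : T => (x / toL a : T)).
Proof. by move=> x0 a b /= /(mulfI x0) /invr_inj. Qed.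

Lemma memFqt_div (x y : L) : x \in Fqt -> y \in Fqt -> x / y \in Fqt.
Proof.
move=> xF yF; apply: (memvM (A := (<<1%VS; lam>>)%AS)) => //.
by rewrite (memvV (<<1%VS; lam>>)%AS).
Qed.

Lemma count_x s (x : T) : (s <= t)%N -> toL x \in P s -> toL x != 0 ->
  #|[pred a : T | Fq0 a && Qc s a x]| = (q ^ s - 1)%N.
Proof.
move=> st xP x0; rewrite -[in RHS](dimP st) -cardV0 -(card_imset _ (divx_inj x0)).
apply: eq_card => u; rewrite !inE; apply/imsetP/idP => [[a] |].
  rewrite !inE /Fq0 /Qc /= => /andP [/andP [aF a0] /and3P [_ xa _]] ->.
  rewrite -memaV' // xa /=; rewrite mulf_neq0 // invr_eq0 //.
move=> /andP [uP u0]; exists (toL x / toL u); last by rewrite /toL invf_div mulrC divfK.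
rewrite !inE /Fq0 /Qc /= xP x0 /toL mulf_neq0 ?invr_eq0 //= andbT.
have xuF : toL x / toL u \in Fqt by apply: memFqt_div; apply: (subvP (P_Fqt s)).
rewrite xuF andbT; apply/memaV; exists (toL u) => //.
by rewrite mulrC divfK.
Qed.

Lemma q_gt0 : (0 < q)%N.
Proof. by apply/card_gt0P; exists 0. Qed.

Lemma sum_cap s : (s <= t)%N ->
  (\sum_(a : T | Fq0 a) #|[pred x : T | Qc s a x]|)%N = ((q ^ s - 1) * (q ^ s - 1))%N.
Proof.
move=> st.
rewrite (eq_bigr (fun a => \sum_(x : T) (Qc s a x : nat))%N); last by move=> a _; rewrite card_sum.
rewrite big_mkcond /=.
rewrite (eq_bigr (fun a => \sum_(x : T) ((Fq0 a && Qc s a x) : nat))%N); last first.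
  move=> a _; have -> : Fq0 a = (toL a \in Fqt) && (toL a != 0) by []. by case: ifP => _ //; rewrite big1.
rewrite exchange_big /=.
rewrite (eq_bigr (fun x => if (toL x \in P s) && (toL x != 0%R) then (q ^ s - 1) else 0)%N); last first.
  move=> x _; rewrite -(card_sum [pred a : T | Fq0 a && Qc s a x]).
  case: ifP => [/andP [xP x0] | H]; first by rewrite count_x.
  apply: eq_card0 => a; rewrite !inE /Qc; apply/negP => /andP [_ /and3P [xP _ x0]].
  by move: H; rewrite xP x0.
rewrite -big_mkcond /= sum_nat_const.
congr (_ * _)%N; rewrite -[in RHS](dimP st) -cardV0; apply: eq_card => x.
by rewrite !inE.
Qed.

Lemma card_cap a s : #|[pred x : T | Qc s a x]| = (q ^ D (toL a) s - 1)%N.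
Proof. by rewrite /D -cardV0; apply: eq_card => x; rewrite !inE /Qc memv_cap andbA. Qed.

Lemma card_Fq0 : #|Fq0| = (q ^ t - 1)%N.
Proof. by rewrite -cardV0; apply: eq_card => x; rewrite !inE. Qed.

Lemma sumD s : (s <= t)%N ->
  (\sum_(a : T | Fq0 a) q ^ D (toL a) s)%N = ((q ^ s - 1) * (q ^ s - 1) + (q ^ t - 1))%N.
Proof.
move=> st.
transitivity (\sum_(a : T | Fq0 a) ((q ^ D (toL a) s - 1) + 1))%N.
  by apply: eq_bigr => a _; rewrite addn1 subn1 prednK // expn_gt0 q_gt0.
rewrite big_split /= -(sum_cap st); congr (_ + _)%N.
  by apply: eq_bigr => a _; rewrite card_cap.
by rewrite sum1dep_card -card_Fq0; apply: eq_card => x; rewrite !inE.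
Qed.

Lemma q_gt1 : (1 < q)%N.
Proof. exact: finNzRing_gt1. Qed.

Lemma D_step a s : Fq0 a -> (s.*2.+1 <= t)%N ->
  (q ^ D (toL a) s.+1 + (q - 1) * (s < d (toL a)))%N = (q * q ^ D (toL a) s)%N.
Proof.
move=> /andP [aF a0] st.
have [ds|sd] := leqP (d (toL a)) s.
  rewrite !D_formula //; last by move: st; rewrite -addnn; lia.
    by rewrite muln0 addn0 subSn // expnS.
  by move: st; rewrite -addnn; lia.
by rewrite !D_small // ?(ltnW sd) // muln1 expn0 muln1 add1n subn1 prednK // q_gt0.
Qed.

Lemma card_sep (R : pred T) : #|[pred a : T | Fq0 a && R a]| = (\sum_(a : T | Fq0 a) (R a : nat))%N.
Proof.
rewrite card_sum [in RHS]big_mkcond /=; apply: eq_bigr => a _.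
by case H: (Fq0 a); rewrite /= ?H //; move: H; rewrite /Fq0 /= => ->.
Qed.

Lemma count_big s : (s.*2.+1 <= t)%N ->
  #|[pred a : T | Fq0 a && (s < d (toL a))%N]| = (q ^ t - q ^ s.*2.+1)%N.
Proof.
move=> st.
have st' : (s.+1 <= t)%N by move: st; rewrite -addnn; lia.
have E := sumD st'; have E0 := sumD (ltnW st').
have : ((\sum_(a : T | Fq0 a) q ^ D (toL a) s.+1) + (q - 1) * #|[pred a : T | Fq0 a && (s < d (toL a))%N]|
   = q * (\sum_(a : T | Fq0 a) q ^ D (toL a) s))%N.
  rewrite (card_sep (fun a : T => (s < d (toL a))%N)) !big_distrr /= -big_split /=.
  by apply: eq_bigr => a Ha; rewrite D_step.
rewrite E E0; set N := #|[pred a : T | Fq0 a && (s < d (toL a))%N]|.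
have q1 := q_gt1.
have Qge : (q ^ s.*2.+1 <= q ^ t)%N by rewrite leq_exp2l.
move: Qge; rewrite expnS -addnn expnD !expnS.
have x1 : (0 < q ^ s)%N by rewrite expn_gt0 q_gt0.
set x := (q ^ s)%N; set Q := (q ^ t)%N => Qge E1.
have E2 : ((q - 1) * (N + q * (x * x)) = (q - 1) * Q)%N.
  have [r hq] : exists r, q = r.+1 by exists q.-1; rewrite prednK // q_gt0.
  have [y hx] : exists y, x = y.+1 by exists x.-1; rewrite prednK.
  have Q1 : (0 < Q)%N by rewrite expn_gt0 q_gt0.
  have [z hQ] : exists z, Q = z.+1 by exists Q.-1; rewrite prednK.
  move: E1; rewrite hq hx hQ !subn1 /=.
  lia.
by move/eqP: E2; rewrite eqn_mul2l subn_eq0 leqNgt q1 /= => /eqP <-; rewrite addnK.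
Qed.

End Poly.

Lemma dim_cap_ge (K : fieldType) (vT : vectType K) (X W V : {vspace vT}) :
  (X <= V)%VS -> (W <= V)%VS -> (\dim X + \dim W <= \dim (X :&: W) + \dim V)%N.
Proof.
move=> XV WV; rewrite -dimv_sum_cap addnC leq_add2l; apply: dimvS.
by rewrite subv_add XV WV.
Qed.

Lemma orbit_count (U : finType) (V : eqType) (f : U -> V) (p : pred U) c :
  (forall a, p a -> #|[pred x | p x && (f x == f a)]| = c) ->
  (size (undup (map f (filter p (enum U)))) * c)%N = #|p|.
Proof.
move=> hc; set s := undup _.
have us : uniq s by apply: undup_uniq.
have ms : forall x, p x -> f x \in s.
  by move=> x px; rewrite mem_undup; apply: map_f; rewrite mem_filter px mem_enum.
rewrite card_sum.
rewrite (eq_bigr (fun x => \sum_(v <- s) ((p x && (f x == v)) : nat))%N); last first.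
  move=> x _; case px: (p x) => /=; last by rewrite big1.
  rewrite -big_mkcond /= sum1_count.
  rewrite (eq_count (a2 := pred1 (f x))); last by move=> v; rewrite /= eq_sym.
  by rewrite count_uniq_mem // ms.
rewrite exchange_big /= big_seq.
rewrite (eq_bigr (fun _ => c)); last first.
  move=> v vs; have : v \in map f (filter p (enum U)) by rewrite -mem_undup.
  case/mapP => a; rewrite mem_filter => /andP [pa _] ->.
  by rewrite -(hc a pa) card_sum.
by rewrite -big_seq big_const_seq count_predT iter_addn_0 mulnC.
Qed.

Section Main.
Variables (F : finFieldType) (L : fieldExtType F) (lam : L) (Sbar : {vspace L}) (b : L) (l m : nat).
Local Notation Fqt := (<<1%VS; lam>>%VS).
Local Notation t := (\dim <<1%VS; lam>>%VS).
Local Notation P := (P lam).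
Local Notation B := (<[b]> * P m)%VS.
Local Notation S := (Sbar + B)%VS.
Hypotheses (hSbar : (Fqt * Sbar <= Sbar)%VS) (dSbar : \dim Sbar = (t * l)%N)
  (b0 : b != 0) (hm : (0 < m < t)%N) (dirS : directv (Sbar + B))
  (hY : (Fqt * S)%VS = fullv) (h2m : (t < 2 * m)%N).

Lemma FqtM u v : u \in Fqt -> v \in Fqt -> u * v \in Fqt.
Proof. by move=> uF vF; apply: (memvM (A := (<<1%VS; lam>>)%AS)). Qed.

Lemma FqtV u : u \in Fqt -> u^-1 \in Fqt.
Proof. by move=> uF; rewrite (memvV (<<1%VS; lam>>)%AS). Qed.

Lemma FqtS x u : u \in Fqt -> x \in Sbar -> u * x \in Sbar.
Proof. by move=> uF xS; apply: (subvP hSbar); apply: memv_mul. Qed.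

Lemma mt : (m <= t)%N.
Proof. by case/andP: hm => _ /ltnW. Qed.

Lemma dimB : \dim B = m.
Proof. by rewrite dim_aV // dimP // mt. Qed.

Lemma bF_cap : (Sbar :&: <[b]> * Fqt = 0)%VS.
Proof.
apply/eqP; rewrite -subv0; apply/subvP => x /memv_capP [xS /memaV [u uF exu]].
rewrite memv0; have [u0|u0] := eqVneq u 0; first by rewrite exu u0 mul0r.
have bS : b \in Sbar.
  by have := FqtS (FqtV uF) xS; rewrite exu mulrA mulVf // mul1r.
have BS : (B <= Sbar)%VS.
  apply/subvP => y /memaV [p pP ->]; apply: FqtS bS.
  exact: (subvP (P_Fqt lam m)).
have cap0 := directv_addP dirS.
have : (B <= 0)%VS by apply/subvP => y yB; rewrite -cap0 memv_cap yB (subvP BS).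
rewrite subv0 => /eqP B0; have := dimB; rewrite B0 dimv0 => m0.
by move: hm; rewrite -m0.
Qed.

Lemma dimS : \dim S = (t * l + m)%N.
Proof.
have := dimv_sum_cap Sbar B; rewrite (directv_addP dirS).
by rewrite dimv0 addn0 dimB dSbar.
Qed.

Lemma FqtFqt : (Fqt * Fqt)%VS = Fqt.
Proof. exact: (prodv_id (<<1%VS; lam>>)%AS). Qed.

Lemma full_eq : fullv = (Sbar + <[b]> * Fqt)%VS.
Proof.
apply/eqP; rewrite eqEsubv subvf andbT -hY prodvDr subv_add.
rewrite (subv_trans hSbar (addvSl _ _)) /=.
rewrite prodvA (prodvC Fqt) -prodvA (subv_trans _ (addvSr _ _)) //.
by apply: prodvSr; rewrite -{2}FqtFqt prodvSr // P_Fqt.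
Qed.

Lemma dimn : \dim {:L} = (t * l + t)%N.
Proof.
have := dimv_sum_cap Sbar (<[b]> * Fqt); rewrite bF_cap dimv0 addn0 -full_eq.
by rewrite dim_aV // dSbar.
Qed.

Lemma t_pos : (0 < t)%N.
Proof. exact: (adim_gt0 (<<1%VS; lam>>)%AS). Qed.

Lemma aSbar_not_sub a : a \notin Fqt -> ~~ (<[a]> * Sbar <= Sbar)%VS.
Proof.
move=> aF; apply/negP => aS.
set U := (Fqt + <[a]>)%VS.
have US : (U * Sbar <= Sbar)%VS by rewrite prodvDl subv_add hSbar aS.
have KS := agenv_modl US.
have KL : (agenv U * fullv <= fullv)%VS by rewrite subvf.
have d1 := field_module_dimS (F := (<<U>>)%AS) KS.
have d2 := field_module_dimS (F := (<<U>>)%AS) KL.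
rewrite dSbar in d1; rewrite dimn in d2.
have dt : (\dim (agenv U) %| t)%N by rewrite -(dvdn_addr _ d1).
have FK : (Fqt <= agenv U)%VS.
  apply: (subv_trans _ (agenvS (addvSl Fqt <[a]>))).
  by rewrite -{1}(agenv_id (1 + <[lam]>)%VS) subvv.
have : (\dim (agenv U) <= t)%N by apply: dvdn_leq t_pos dt.
move=> le; have eqK : Fqt == agenv U by rewrite eqEdim FK le.
move/negP: aF; apply; rewrite (eqP eqK).
by apply: (subvP (sub_agenv U)); rewrite -[a]add0r; apply: memv_add; [exact: mem0v | exact: memv_line].
Qed.

Lemma capS_out a : a != 0 -> a \notin Fqt ->
  (\dim (S :&: <[a]> * S) + (t * l + t) = 2 * (t * l + m))%N.
Proof.
move=> a0 aF.
have [y yaS ynS] := subvPn (aSbar_not_sub aF).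
have : y \in fullv by rewrite memvf.
rewrite full_eq => /memv_addP [s' s'S [w /memaV [u uF ->] ey]].
have u0 : u != 0 by apply: contraNneq ynS => u0; rewrite ey u0 mul0r addr0.
have bsub : (<[b]> * Fqt <= Sbar + <[a]> * Sbar)%VS.
  apply/subvP => z /memaV [v vF ->].
  have vuF : v / u \in Fqt by rewrite FqtM ?FqtV.
  have -> : v * b = (v / u) * y + - ((v / u) * s').
    by rewrite ey mulrDr addrAC subrr add0r mulrA divfK.
  rewrite addrC; apply: memv_add; first by rewrite rpredN FqtS.
  move: yaS => /memaV [x xS ->]; apply/memaV; exists (v / u * x); last by rewrite mulrA.
  exact: FqtS.
have full_le : (fullv <= S + <[a]> * S)%VS.
  rewrite full_eq subv_add (subv_trans (addvSl Sbar B) (addvSl _ _)) /=.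
  apply: (subv_trans bsub); apply: addvS; first exact: addvSl.
  by apply: prodvSr; apply: addvSl.
have dsum : \dim (S + <[a]> * S) = \dim {:L}.
  by apply/eqP; rewrite eqn_leq dimvS ?subvf // dimvS.
have := dimv_sum_cap S (<[a]> * S); rewrite dsum dimn dim_aV // dimS.
by rewrite addnC mul2n addnn.
Qed.

Lemma aSbar_eq a : a \in Fqt -> a != 0 -> (<[a]> * Sbar)%VS = Sbar.
Proof.
move=> aF a0; apply/eqP; rewrite eqEdim dim_aV // leqnn andbT.
by apply: subv_trans hSbar; apply: prodvSl; rewrite -memvE.
Qed.

Lemma capS_in a : a \in Fqt -> a != 0 ->
  \dim (S :&: <[a]> * S) = (t * l + D lam a m)%N.
Proof.
move=> aF a0.
have eaS : (<[a]> * S = Sbar + <[b]> * (<[a]> * P m))%VS.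
  by rewrite prodvDr aSbar_eq // !prodvA (prodvC <[a]>%VS).
have eSum : (S + <[a]> * S = Sbar + <[b]> * (P m + <[a]> * P m))%VS.
  rewrite eaS prodvDr -!addvA (addvA B Sbar) (addvC B Sbar) -(addvA Sbar B) (addvA Sbar Sbar) addvv.
  done.
have dPsum : (P m + <[a]> * P m <= Fqt)%VS by rewrite subv_add P_Fqt aV_Fqt ?P_Fqt.
have cap0 : (Sbar :&: <[b]> * (P m + <[a]> * P m) = 0)%VS.
  apply/eqP; rewrite -subv0 -bF_cap; apply: capvS; first exact: subvv.
  exact: prodvSr.
have h1 := dimv_sum_cap Sbar (<[b]> * (P m + <[a]> * P m)).
rewrite cap0 dimv0 addn0 -eSum dim_aV // in h1.
have h2 := dimv_sum_cap (P m) (<[a]> * P m); rewrite dim_aV // dimP ?mt // in h2.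
have h3 := dimv_sum_cap S (<[a]> * S); rewrite dim_aV // dimS in h3.
rewrite /D; move: h1 h2 h3; rewrite dSbar; set A1 := \dim (S + <[a]> * S); set A2 := \dim (P m + <[a]> * P m); set A3 := \dim (P m :&: <[a]> * P m); set A4 := \dim (S :&: <[a]> * S); lia.
Qed.

Lemma D_upper a : a \in Fqt -> a != 0 -> (t - m < d lam a)%N -> (D lam a m + t <= m + m)%N.
Proof.
move=> aF a0 lt.
set dd := d lam a.
have dh := d_half aF a0.
set s' := (t - dd)%N.
have ds' : (dd <= s')%N by rewrite /s'; move: dh (odd_double_half t); rewrite -addnn; case: (odd t) => /=; lia.
have s'm : (s' <= m)%N by rewrite /s'; lia.
have Ds' : D lam a s' = (s' - dd)%N by apply: D_formula => //; rewrite /s' subnK // ltnW // d_lt_t.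
have s't : (s' <= t)%N by rewrite /s' leq_subr.
set X := (P m :&: <[a]> * P m)%VS.
have h1 := dim_cap_ge (capvSl (P m) (<[a]> * P m)) (P_le lam s'm).
rewrite (dimP s't) (dimP mt) -/X in h1.
set Y := (X :&: P s')%VS.
have h2 := dim_cap_ge (subv_trans (capvSl X (P s')) (capvSr (P m) (<[a]> * P m)))
  (prodvSr <[a]>%VS (P_le lam s'm)).
rewrite !dim_aV // (dimP s't) (dimP mt) -/Y in h2.
have h3 : (\dim (Y :&: <[a]> * P s') <= D lam a s')%N.
  apply: dimvS; rewrite /Y /X; apply/subvP => x; rewrite !memv_cap.
  by case/andP => /andP [/andP [_ _] ->] ->.
rewrite Ds' in h3.
have : (D lam a m = \dim X) by [].
move: h1 h2 h3; rewrite /s'; set x1 := \dim X; set x2 := \dim Y; set x3 := \dim (Y :&: _); 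
lia.
Qed.

Lemma Dm_eq a : a \in Fqt -> a != 0 -> D lam a m = (m - minn (d lam a) (t - m))%N.
Proof.
move=> aF a0; have [le|lt] := leqP (d lam a) (t - m).
  rewrite D_formula //; move: le hm; lia.
have u := D_upper aF a0 lt; have g := D_ge aF a0 mt.
by move: u g hm; lia.
Qed.

Lemma capS_in' a : a \in Fqt -> a != 0 ->
  \dim (S :&: <[a]> * S) = (t * l + (m - minn (d lam a) (t - m)))%N.
Proof. by move=> aF a0; rewrite capS_in // Dm_eq. Qed.

Lemma P1 : P 1 = 1%VS.
Proof. by rewrite P_S P0 add0v expr0. Qed.

Lemma d0_iff a : a \in Fqt -> a != 0 -> (d lam a == 0%N) = (a \in 1%VS).
Proof.
move=> aF a0; apply/eqP/idP => [d0 | a1].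
  have := D_d aF a0; rewrite d0 /D lt0n dimv_eq0 -vpick0 => x0.
  have := memv_pick (P 1 :&: <[a]> * P 1)%VS.
  move: x0; set x := vpick _ => x0.
  rewrite memv_cap P1 => /andP [x1 /memaV [u u1 exu]].
  have u0 : u != 0 by apply: contraNneq x0 => u0; rewrite exu u0 mul0r.
  have -> : a = u^-1 * x by rewrite exu mulrA mulVf // mul1r.
  apply: (memvM (A := 1%AS)) => //.
  by rewrite (memvV 1%AS).
apply/eqP; rewrite -leqn0 /d; case: ex_minnP => e _ /(_ 0%N); apply.
rewrite /Qd /D lt0n dimv_eq0; apply/orP; left; apply/eqP => cap0.
have : a \in (P 1 :&: <[a]> * P 1)%VS.
  rewrite memv_cap P1 a1; apply/memaV; exists 1; first exact: mem1v.
  by rewrite mul1r.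
by rewrite cap0 memv0 (negPf a0).
Qed.

Definition w a := if a \in Fqt then minn (d lam a) (t - m) else (t - m)%N.

Lemma capdim a : a != 0 -> (\dim (S :&: <[a]> * S) + w a = t * l + m)%N.
Proof.
move=> a0; rewrite /w; case: ifP => aF.
  rewrite capS_in' //; have := geq_minr (d lam a) (t - m); move: hm h2m.
  set x := minn _ _; lia.
have := capS_out a0 (negbT aF); move: hm h2m; set x := \dim _; lia.
Qed.

Lemma sdist_eq a : a != 0 -> sdist S (mulsp a S) = (2 * w a)%N.
Proof.
move=> a0; rewrite /sdist /mulsp dimS; have := capdim a0.
set x := \dim _; lia.
Qed.

Lemma w0 a : a != 0 -> (w a == 0%N) = (a \in 1%VS).
Proof.
move=> a0; rewrite /w; case: ifP => aF.
  have tm : (0 < t - m)%N by move: hm; lia.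
  rewrite -d0_iff //; have [le|lt] := leqP (d lam a) (t - m); apply/eqP/eqP => h; lia.
apply/eqP/idP => [|a1]; first by move: hm; lia.
by move: aF; rewrite (subvP (sub1_agenv _) _ a1).
Qed.

Lemma fiber a a0 : a != 0 -> a0 != 0 -> (mulsp a S == mulsp a0 S) = (a \in <[a0]>%VS).
Proof.
move=> a_0 a00; rewrite /mulsp; apply/eqP/idP => [e | /vlineP [k ek]].
  set c := a / a0.
  have c0 : c != 0 by rewrite mulf_neq0 ?invr_eq0.
  have cS : (<[c]> * S = S)%VS.
    rewrite /c -prodv_line (prodvC <[a]>%VS) -prodvA e prodvA prodv_line mulVf //.
    exact: prod1v.
  have := capdim c0; rewrite cS capvv dimS => /eqP; rewrite -{2}(addn0 (t * l + m)%N) eqn_add2l.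
  rewrite w0 // => /vlineP [k ek]; apply/vlineP; exists k.
  by rewrite -[a](divfK a00) -/c ek -scalerAl mul1r.
have k0 : k != 0 by apply: contraNneq a_0 => k0; rewrite ek k0 scale0r.
suff -> : <[a]>%VS = <[a0]>%VS by [].
apply/eqP; rewrite eqEdim !dim_vline a_0 a00 leqnn andbT -memvE ek.
by apply: memvZ; apply: memv_line.
Qed.

Local Notation T := (finvect_type L).
Local Notation q := #|F|.

Lemma weight_card i : (orb_weight S i * (q - 1))%N =
  #|[pred a : T | (a != 0) && (sdist S (mulsp a S) == 2 * i)%N]|.
Proof.
rewrite /orb_weight; apply: orbit_count => a0 /andP [a00 pa0].
transitivity #|[pred x : T | (toL x \in <[toL a0]>%VS) && (toL x != 0)]|; last first.
  by rewrite cardV0 dim_vline a00 expn1.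
apply: eq_card => x; rewrite !inE /=; apply/idP/idP.
  by case/andP => /andP [x0 _]; rewrite fiber // => ->.
case/andP => xa x0; rewrite x0 fiber // xa andbT /=.
by move: xa; rewrite -fiber // => /eqP ->.
Qed.

Lemma p_eq i (a : T) : (a != 0) && (sdist S (mulsp a S) == 2 * i)%N = (a != 0) && (w a == i).
Proof.
case a0: (a != 0) => //=; rewrite sdist_eq //; apply/eqP/eqP => h; lia.
Qed.

Lemma count_i i : (1 <= i <= t - m - 1)%N ->
  #|[pred a : T | (a != 0) && (sdist S (mulsp a S) == 2 * i)%N]| = (q ^ i.*2.+1 - q ^ i.-1.*2.+1)%N.
Proof.
move=> /andP [i1 it].
have e1 : #|[pred a : T | (a != 0) && (sdist S (mulsp a S) == 2 * i)%N]| =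
          #|[pred a : T | Fq0 lam a && (d lam (toL a) == i)]|.
  apply: eq_card => a; rewrite !inE p_eq /w /Fq0 /=.
  case a0: (toL a != 0); rewrite ?andbF //=.
  case: ifP => aF /=; last by apply/eqP; move: it; lia.
  by have [le|lt] := leqP (d lam (toL a)) (t - m); apply/eqP/eqP; lia.
have c1 := count_big (lam := lam) (s := i.-1).
have c2 := count_big (lam := lam) (s := i).
have e2 : #|[pred a : T | Fq0 lam a && (i.-1 < d lam (toL a))%N]| =
   (#|[pred a : T | Fq0 lam a && (d lam (toL a) == i)]| + #|[pred a : T | Fq0 lam a && (i < d lam (toL a))%N]|)%N.
  rewrite !card_sep -big_split /=; apply: eq_bigr => a _.
  by case: (ltngtP i (d lam (toL a))) => h; move: h i1; lia.
have h1 : ((i.-1).*2.+1 <= t)%N by move: it h2m; lia.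
have h2 : (i.*2.+1 <= t)%N by move: it h2m; lia.
rewrite e1; move: (c1 h1) (c2 h2) e2.
set A := #|_|; set Bc := #|_|; set C := #|_|.
have : (q ^ i.-1.*2.+1 <= q ^ i.*2.+1)%N by rewrite leq_exp2l ?q_gt1 //; lia.
have : (q ^ i.*2.+1 <= q ^ t)%N by rewrite leq_exp2l ?q_gt1.
set x := (q ^ _)%N; set y := (q ^ _)%N; set z := (q ^ _)%N.
lia.
Qed.

Lemma count_tm :
  #|[pred a : T | (a != 0) && (sdist S (mulsp a S) == 2 * (t - m))%N]| =
  (q ^ \dim {:L} - q ^ (2 * (t - m) - 1))%N.
Proof.
have e1 : #|[pred a : T | (a != 0) && (sdist S (mulsp a S) == 2 * (t - m))%N]| =
   (#|[pred a : T | toL a \notin Fqt]| + #|[pred a : T | Fq0 lam a && (t - m - 1 < d lam (toL a))%N]|)%N.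
  rewrite !(card_sum (U := T)) -big_split /=; apply: eq_bigr => a _.
  rewrite p_eq /w /toL.
  case aF: (a \in Fqt) => /=.
    case: (a != 0) => //=.
    by have [le|lt] := leqP (d lam a) (t - m); case: eqP => h; move: h hm; lia.
  have a0 : a != 0 :> L by apply: contraFneq aF => ->; rewrite mem0v.
  by rewrite a0 eqxx.
rewrite e1.
have ht : ((t - m - 1).*2.+1 <= t)%N by move: hm h2m; lia.
rewrite (count_big (lam := lam) ht).
have cF : #|[pred a : T | toL a \notin Fqt]| = (q ^ \dim {:L} - q ^ t)%N.
  rewrite -(cardV fullv) -(cardV Fqt).
  have -> : #|[pred x : T | x \in (fullv : {vspace L})]| = #|T|.
    by apply: eq_card => x; rewrite !inE memvf.
  rewrite -(cardC [pred a : T | toL a \in Fqt]).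
  have -> : #|[pred x : T | x \in Fqt]| = #|[pred a : T | toL a \in Fqt]| by [].
  by rewrite addKn; apply: eq_card => a; rewrite !inE.
rewrite cF.
have : ((t - m - 1).*2.+1 = 2 * (t - m) - 1)%N by move: hm h2m; lia.
move=> ->.
have : (q ^ (2 * (t - m) - 1) <= q ^ t)%N by rewrite leq_exp2l ?q_gt1 //; move: hm h2m; lia.
have : (q ^ t <= q ^ \dim {:L})%N by rewrite leq_exp2l ?q_gt1 // dimn leq_addl.
set x := (q ^ _)%N; set y := (q ^ _)%N; set z := (q ^ _)%N.
lia.
Qed.

End Main.

Unset Implicit Arguments.

Theorem theorem4p12 (F : finFieldType) (L : fieldExtType F)
  (lam : L) (Sbar : {vspace L}) (b : L) (l m : nat) (S : {vspace L}) :
  let q := #|F| in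
  let n := \dim {:L} in
  let Fqt := <<1%VS; lam>>%VS in
  let t := \dim Fqt in
  let k := (t * l + m)%N in
  let B := (<[b]> * span [seq (lam ^+ j)%R | j <- iota 0 m])%VS in
  lam \notin 1%VS ->
  (Fqt * Sbar <= Sbar)%VS ->
  \dim Sbar = (t * l)%N -> (0 < l)%N ->
  b != 0 ->
  (Fqt :&: <[b]> * Sbar = 0)%VS ->
  (0 < m < t)%N ->
  (t.+1 <= k <= n)%N ->
  directv (Sbar + B) ->
  S = (Sbar + B)%VS ->
  (Fqt * S)%VS = fullv ->
  (t < 2 * m)%N ->
  FWS S (2 * m + t * (l - 1)) ->
  (forall i, (1 <= i <= t - m - 1)%N ->
     orb_weight S i = ((q + 1) * q ^ (2 * i - 1))%N) /\
  ((q - 1) * orb_weight S (t - m) = q ^ n - q ^ (2 * (t - m) - 1))%N.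
Proof.
move=> q n Fqt t k B _ hSbar dSbar _ b0 _ hm _ dirS eS hY h2m _.
subst S.
have WC := weight_card hSbar dSbar b0 hm dirS hY h2m.
have q1 : (1 < q)%N by exact: q_gt1.
split.
  move=> i hi.
  have := WC i; rewrite (count_i hSbar dSbar b0 hm dirS hY h2m hi).
  case/andP: hi => i1 _.
  have -> : (i.*2.+1 = (i.-1).*2.+1 + 2)%N by move: i1; lia.
  have -> : (2 * i - 1 = (i.-1).*2.+1)%N by move: i1; lia.
  rewrite expnD; set x := (q ^ _)%N => e.
  apply/eqP; rewrite -(eqn_pmul2r (_ : 0 < q - 1)%N); last by move: q1; lia.
  rewrite e; apply/eqP.
  have [r hr] : exists r, q = r.+2 by exists (q - 2)%N; move: q1; lia.
  rewrite hr; lia.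
by rewrite mulnC (WC (t - m)%N) (count_tm hSbar dSbar b0 hm dirS hY h2m).
Qed.
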